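(* Let $r\in(r_-,0)\cup(r_+,\infty)$, where $r_\pm=(11\pm5\sqrt5)/2$. Then $T^2$ maps the bounded connected component of $E_r$ into the unbounded connected component of $E_r$.
   Context: $T(x,y)=\bigg(\dfrac{(1+y)(1+x-xy)^2}{(1+x)(-1-y+xy)(1+x-y^2)},\ \dfrac{(x-y)^2(1+x+y)}{(1+y-x^2)(1+x-y^2)}\bigg)$. $E_r\subset\mathbb{RP}^2$ is the real projective curve given by the homogenization of $(x+1)(y+1)(x+y+1)-rxy=0$, i.e. the level set $I=r$ of $I(x,y)=\frac{(x+1)(y+1)(x+y+1)}{xy}$. For these $r$, $E_r$ has exactly two connected components, one bounded (its intersection with the affine plane is bounded) and one unbounded. $T^2$ preserves the set $E_r$ (where defined). *)

(* Defs.v *)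
From HB Require Import structures.
From mathcomp Require Import all_boot all_order all_algebra.
From mathcomp Require Import all_classical all_reals all_analysis.
Import numFieldNormedType.Exports.
Set Implicit Arguments. Unset Strict Implicit. Unset Printing Implicit Defensive.
Import Order.TTheory GRing.Theory Num.Theory.
Local Open Scope ring_scope.
Local Open Scope classical_set_scope.

Section Defs.
Variable R : realType.

Definition r_minus : R := (11 - 5 * Num.sqrt 5) / 2.
Definition r_plus  : R := (11 + 5 * Num.sqrt 5) / 2.

Definition Epoly (r x y : R) : R := (x + 1) * (y + 1) * (x + y + 1) - r * x * y.

(* affine part E_r ∩ R^2 of the projective curve E_r *)
Definition Eaff (r : R) : set (R * R) := [set p | Epoly r p.1 p.2 = 0].

Definition T_defined (p : R * R) : Prop :=
  let x := p.1 in let y := p.2 in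
  (1 + x) * (-1 - y + x * y) * (1 + x - y ^+ 2) != 0 /\
  (1 + y - x ^+ 2) * (1 + x - y ^+ 2) != 0.

Definition T (p : R * R) : R * R :=
  let x := p.1 in let y := p.2 in
  ((1 + y) * (1 + x - x * y) ^+ 2 /
     ((1 + x) * (-1 - y + x * y) * (1 + x - y ^+ 2)),
   (x - y) ^+ 2 * (1 + x + y) / ((1 + y - x ^+ 2) * (1 + x - y ^+ 2))).

Definition bounded2 (A : set (R * R)) : Prop :=
  exists M : R, forall p, A p -> `|p.1| <= M /\ `|p.2| <= M.

End Defs.

(* Main.v *)
Require Import Defs.
From HB Require Import structures.
From mathcomp Require Import all_boot all_order all_algebra.
From mathcomp Require Import all_classical all_reals all_analysis.
From mathcomp Require Import ring lra.
Import numFieldNormedType.Exports.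
Import Order.TTheory GRing.Theory Num.Theory.
Local Open Scope ring_scope.
Local Open Scope classical_set_scope.

Definition pt {R : realType} (sw : bool) (a b : R) : R * R := if sw then (b, a) else (a, b).

Lemma pt_cont (R : realType) (g : R -> R) sw x :
  {for x, continuous g} -> {for x, continuous (fun t => pt sw t (g t))}.
Proof.
move=> gc; rewrite /pt; case: sw.
- exact: (cvg_pair gc cvg_id).
- exact: (cvg_pair cvg_id gc).
Qed.

Lemma Epoly_sym (R : realType) (r a b : R) : Epoly r a b = Epoly r b a.
Proof. rewrite /Epoly; ring. Qed.

Lemma graph_unbounded (R : realType) (r : R) (I : set R) (g : R -> R) sw x0 :
  is_interval I -> I x0 -> (forall M : R, exists x, I x /\ M < `|x|) ->
  (forall x, I x -> {for x, continuous g}) ->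
  (forall x, I x -> Epoly r x (g x) = 0) ->
  ~ bounded2 (connected_component (Eaff r) (pt sw x0 (g x0))).
Proof.
move=> Iint Ix0 Iunb gc gE.
set F := fun t => pt sw t (g t).
have Sconn : connected (F @` I).
  apply: connected_continuous_connected; first by apply/connected_intervalP.
  apply: continuous_in_subspaceT => x; rewrite inE => Ix.
  exact: pt_cont (gc x Ix).
have SE : F @` I `<=` Eaff r.
  move=> _ [x Ix <-]; rewrite /F /pt /Eaff /=; case: (sw) => /=.
    by rewrite Epoly_sym; apply: gE.
  exact: gE.
have Ssub := connected_component_max (ex_intro2 _ _ x0 Ix0 erefl : (F @` I) (F x0)) SE Sconn.
move=> [M HM].
have [x [Ix Mx]] := Iunb M.
have := HM (F x) (Ssub _ (ex_intro2 _ _ x Ix erefl)).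
rewrite /F /pt; case: (sw) => /= -[h1 h2].
  by move: h2; rewrite leNgt Mx.
by move: h1; rewrite leNgt Mx.
Qed.

Section S.
Variable R : realType.
Implicit Types (r x e : R).
Definition bq r x : R := (x+1)*(x+2) - r*x.
Definition Dq r x : R := bq r x ^+ 2 - 4 * (x+1)^+3.
Definition gp r e x : R := (- bq r x + e * Num.sqrt (Dq r x)) / (2*(x+1)).
Definition gr r x : R := 2*(x+1)^+2 / (- bq r x - Num.sqrt (Dq r x)).

Lemma cont_bq r x : {for x, continuous (bq r)}.
Proof.
rewrite /bq.
apply: cvgB; last by apply: cvgM; [exact: cvg_cst| exact: cvg_id].
apply: cvgM; (apply: cvgD; [exact: cvg_id | exact: cvg_cst]).
Qed.

Lemma cont_Dq r x : {for x, continuous (Dq r)}.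
Proof.
rewrite /Dq.
apply: cvgB.
  exact: (continuous_comp (cont_bq r x) (@exprn_continuous R 2 (bq r x))).
apply: cvgM; first exact: cvg_cst.
have h1 : {for x, continuous (fun t : R => t + 1)} by apply: cvgD; [exact: cvg_id | exact: cvg_cst].
exact: (continuous_comp h1 (@exprn_continuous R _ _)).
Qed.

Lemma cont_sD r x : {for x, continuous (fun t => Num.sqrt (Dq r t))}.
Proof.
exact: (continuous_comp (cont_Dq r x) (@sqrt_continuous R _)).
Qed.

Lemma cont_gp r e x : x + 1 != 0 -> {for x, continuous (gp r e)}.
Proof.
move=> hx; rewrite /gp.
apply: cvgM.
  apply: cvgD; first by apply: cvgN; exact: cont_bq.
  by apply: cvgM; [exact: cvg_cst | exact: cont_sD].
apply: cvgV; first by rewrite mulf_neq0 // pnatr_eq0.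
apply: cvgM; first exact: cvg_cst.
apply: cvgD; [exact: cvg_id | exact: cvg_cst].
Qed.

Lemma cont_gr r x : - bq r x - Num.sqrt (Dq r x) != 0 -> {for x, continuous (gr r)}.
Proof.
move=> hx; rewrite /gr.
apply: cvgM.
  apply: cvgM; first exact: cvg_cst.
  have h1 : {for x, continuous (fun t : R => t + 1)} by apply: cvgD; [exact: cvg_id | exact: cvg_cst].
  exact: (continuous_comp h1 (@exprn_continuous R _ _)).
apply: cvgV => //.
apply: cvgB; first by apply: cvgN; exact: cont_bq.
exact: cont_sD.
Qed.

Lemma Epoly_quad r x y : Epoly r x y = (x+1)*y^+2 + bq r x * y + (x+1)^+2.
Proof. rewrite /Epoly /bq; ring. Qed.

Lemma gp_on r e x : x + 1 != 0 -> 0 <= Dq r x -> e^+2 = 1 -> Epoly r x (gp r e x) = 0.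
Proof.
move=> hx hD he; rewrite Epoly_quad /gp.
have hs : Num.sqrt (Dq r x) ^+ 2 = Dq r x by rewrite sqr_sqrtr.
move: hs; set s := Num.sqrt _; rewrite /Dq; set b := bq r x => hs.
have -> : (x+1) * ((-b + e*s)/(2*(x+1)))^+2 + b * ((-b+e*s)/(2*(x+1))) + (x+1)^+2
   = (e^+2 * s^+2 - b^+2 + 4*(x+1)^+3)/(4*(x+1)).
  by field.
rewrite he hs mul1r.
have -> : (b ^+ 2 - 4 * (x + 1) ^+ 3 - b ^+ 2 + 4 * (x + 1) ^+ 3) = 0 by ring.
by rewrite mul0r.
Qed.

Lemma gr_on r x : - bq r x - Num.sqrt (Dq r x) != 0 -> 0 <= Dq r x -> Epoly r x (gr r x) = 0.
Proof.
move=> hx hD; rewrite Epoly_quad /gr.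
have hs : Num.sqrt (Dq r x) ^+ 2 = Dq r x by rewrite sqr_sqrtr.
move: hx hs; set s := Num.sqrt _; rewrite /Dq; set b := bq r x => hx hs.
have -> : (x+1) * (2*(x+1)^+2/(-b - s))^+2 + b * (2*(x+1)^+2/(-b - s)) + (x+1)^+2
   = (x+1)^+2 * (4*(x+1)^+3 - b^+2 + s^+2)/((-b-s)^+2).
  by field.
rewrite hs.
have -> : (x + 1) ^+ 2 * (4 * (x + 1) ^+ 3 - b ^+ 2 + (b ^+ 2 - 4 * (x + 1) ^+ 3)) = 0 by ring.
by rewrite mul0r.
Qed.

Lemma gp_mem r x0 y0 : Epoly r x0 y0 = 0 -> x0 + 1 != 0 ->
  exists e : R, e^+2 = 1 /\ y0 = gp r e x0.
Proof.
move=> hE hx.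
set z := 2*(x0+1)*y0 + bq r x0.
have hz : Dq r x0 = z^+2.
  have e1 : z^+2 - Dq r x0 = 4*(x0+1) * ((x0+1)*y0^+2 + bq r x0 * y0 + (x0+1)^+2) by rewrite /z /Dq; ring.
  by rewrite -Epoly_quad hE mulr0 in e1; apply/eqP; rewrite eq_sym -subr_eq0 e1.
have hs : Num.sqrt (Dq r x0) = `|z| by rewrite hz sqrtr_sqr.
exists (if 0 <= z then 1 else -1); split; first by case: ifP => _; rewrite ?expr1n ?sqrrN ?expr1n.
have hez : (if 0 <= z then 1 else -1) * `|z| = z.
  case: ifP => hz0; first by rewrite mul1r ger0_norm.
  by rewrite ltr0_norm ?mulN1r ?opprK // ltNge hz0.
rewrite /gp hs hez /z; by field.
Qed.

Lemma gr_mem r x0 y0 : Epoly r x0 y0 = 0 -> 0 <= 2*(x0+1)*y0 + bq r x0 ->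
  - bq r x0 - Num.sqrt (Dq r x0) != 0 -> y0 = gr r x0.
Proof.
move=> hE hz hden.
set z := 2*(x0+1)*y0 + bq r x0.
have hz2 : Dq r x0 = z^+2.
  have e1 : z^+2 - Dq r x0 = 4*(x0+1) * ((x0+1)*y0^+2 + bq r x0 * y0 + (x0+1)^+2) by rewrite /z /Dq; ring.
  by rewrite -Epoly_quad hE mulr0 in e1; apply/eqP; rewrite eq_sym -subr_eq0 e1.
have hs : Num.sqrt (Dq r x0) = z by rewrite hz2 sqrtr_sqr ger0_norm.
move: hden; rewrite hs => hden.
rewrite /gr; apply: (mulIf hden); rewrite hs divfK //.
have e1 : y0 * (-bq r x0 - z) - 2 * (x0+1)^+2 = -2 * ((x0+1)*y0^+2 + bq r x0 * y0 + (x0+1)^+2) by rewrite /z; ring.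
by rewrite -Epoly_quad hE mulr0 in e1; apply/eqP; rewrite -subr_eq0 e1.
Qed.

Lemma unb_le (x0 M : R) : exists x, x <= x0 /\ M < `|x|.
Proof.
exists (- (`|x0| + `|M| + 1)); split.
  have : 0 <= `|M| by [].
  have : - x0 <= `|x0| by rewrite -normrN ler_norm.
  lra.
rewrite normrN ger0_norm; last by rewrite !addr_ge0.
have : M <= `|M| by rewrite ler_norm.
have : 0 <= `|x0| by [].
lra.
Qed.

Lemma unb_ge (x0 M : R) : exists x, x0 <= x /\ M < `|x|.
Proof.
exists (`|x0| + `|M| + 1); split.
  have : x0 <= `|x0| by rewrite ler_norm.
  have : 0 <= `|M| by [].
  lra.
rewrite ger0_norm; last by rewrite !addr_ge0.
have : M <= `|M| by rewrite ler_norm.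
have : 0 <= `|x0| by [].
lra.
Qed.

Lemma case_a r x0 y0 sw : Epoly r x0 y0 = 0 -> x0 < -1 ->
  ~ bounded2 (connected_component (Eaff r) (pt sw x0 y0)).
Proof.
move=> hE hx.
have hx1 : x0 + 1 != 0 by apply: ltr0_neq0; lra.
have [e [he ->]] := gp_mem _ _ _ hE hx1.
apply: (@graph_unbounded R r [set x | x <= x0]).
- by move=> a b ha hb z /andP[_ hz]; rewrite /=; exact: le_trans hz hb.
- by rewrite /= lexx.
- by move=> M; have [x [h1 h2]] := unb_le x0 M; exists x.
- by move=> x /= hxx; apply: cont_gp; apply: ltr0_neq0; lra.
- move=> x /= hxx; apply: gp_on => //; first by apply: ltr0_neq0; lra.
  rewrite /Dq; have h : x + 1 < 0 by lra.
  have : 0 <= bq r x ^+ 2 by rewrite sqr_ge0.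
  have : (x+1)^+3 <= 0 by rewrite exprS; apply: mulr_le0_ge0; [lra | rewrite sqr_ge0].
  lra.
Qed.

Lemma case_b r x0 y0 sw : r < 0 -> Epoly r x0 y0 = 0 -> 0 <= x0 ->
  ~ bounded2 (connected_component (Eaff r) (pt sw x0 y0)).
Proof.
move=> hr hE hx.
have hx1 : x0 + 1 != 0 by apply: lt0r_neq0; lra.
have [e [he ->]] := gp_mem _ _ _ hE hx1.
apply: (@graph_unbounded R r [set x | x0 <= x]).
- by move=> a b ha hb z /andP[hz _]; rewrite /=; exact: le_trans ha hz.
- by rewrite /= lexx.
- by move=> M; have [x [h1 h2]] := unb_ge x0 M; exists x.
- by move=> x /= hxx; apply: cont_gp; apply: lt0r_neq0; lra.
- move=> x /= hxx; apply: gp_on => //; first by apply: lt0r_neq0; lra.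
  have -> : Dq r x = x * (x * (x+1)^+2 - 2*r*(x+1)*(x+2) + r^+2 * x) by rewrite /Dq /bq; ring.
  have h0 : 0 <= x by lra.
  apply: mulr_ge0 => //.
  have : 0 <= x * (x+1)^+2 by apply: mulr_ge0 => //; rewrite sqr_ge0.
  have : 0 <= r^+2 * x by apply: mulr_ge0 => //; rewrite sqr_ge0.
  have : 0 <= - r * (x+1) * (x+2) by apply: mulr_ge0; [apply: mulr_ge0|]; lra.
  lra.
Qed.

Lemma bq_pos r x : 1 < r -> x <= 0 -> 0 < bq r x.
Proof.
move=> hr hx; rewrite /bq.
have [h|h] := lerP x (-1/2).
  have : 0 <= (x + 3/2)^+2 by rewrite sqr_ge0.
  have : r / 2 <= - r * x by nra.
  nra.
have : 1 <= (x + 3/2)^+2 by nra.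
nra.
Qed.

Lemma Dq_ge0 r x : 1 < r -> x <= 0 -> 0 <= Dq r x.
Proof.
move=> hr hx; rewrite /Dq.
have [h|h] := lerP x (-1).
  have : 0 <= bq r x ^+ 2 by rewrite sqr_ge0.
  have : (x+1)^+3 <= 0 by rewrite exprS; apply: mulr_le0_ge0; [lra | rewrite sqr_ge0].
  lra.
have hb : (x+1)*(x+2) <= bq r x by rewrite /bq; nra.
have hb0 : 0 <= (x+1)*(x+2) by nra.
have : ((x+1)*(x+2))^+2 <= bq r x ^+2 by rewrite ler_sqr ?nnegrE //; lra.
have e : ((x+1)*(x+2))^+2 - 4 * (x+1)^+3 = ((x+1) * x)^+2 by ring.
have : 0 <= ((x+1) * x)^+2 by rewrite sqr_ge0.
lra.
Qed.

Lemma case_e r x0 y0 sw : 1 < r -> Epoly r x0 y0 = 0 -> -1 <= x0 -> x0 <= 0 -> -1 <= y0 ->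
  ~ bounded2 (connected_component (Eaff r) (pt sw x0 y0)).
Proof.
move=> hr hE hx1 hx0 hy1.
have hden : forall x, x <= 0 -> - bq r x - Num.sqrt (Dq r x) != 0.
  move=> x hx; apply: ltr0_neq0.
  have := sqrtr_ge0 (Dq r x); have := bq_pos _ _ hr hx; lra.
have hz : 0 <= 2*(x0+1)*y0 + bq r x0.
  have e1 : 2*(x0+1)*y0 + bq r x0 = 2*((x0+1)*(y0+1)) + (-x0)*(r - 1 - x0) by rewrite /bq; ring.
  rewrite e1; apply: addr_ge0.
    by apply: mulr_ge0 => //; apply: mulr_ge0; lra.
  by apply: mulr_ge0; lra.
rewrite (gr_mem _ _ _ hE hz (hden x0 hx0)).
apply: (@graph_unbounded R r [set x | x <= x0]).
- by move=> a b ha hb z /andP[_ hz']; rewrite /=; exact: le_trans hz' hb.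
- by rewrite /= lexx.
- by move=> M; have [x [h1 h2]] := unb_le x0 M; exists x.
- by move=> x /= hxx; apply: cont_gr; apply: hden; lra.
- move=> x /= hxx; apply: gr_on; first by apply: hden; lra.
  by apply: Dq_ge0 => //; lra.
Qed.

Lemma unb_neg r (p : R * R) : r < 0 -> Epoly r p.1 p.2 = 0 ->
  ~~ ((-1 < p.1 < 0) && (-1 < p.2 < 0)) ->
  ~ bounded2 (connected_component (Eaff r) p).
Proof.
case: p => x0 y0 /= hr hE hn.
have hE' : Epoly r y0 x0 = 0 by rewrite Epoly_sym.
have -> : (x0, y0) = pt false x0 y0 by [].
have [h|h] := ltrP x0 (-1); first exact: case_a.
have [h'|h'] := lerP 0 x0; first exact: case_b.
rewrite [pt _ _ _](_ : _ = pt true y0 x0) //.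
have [h2|h2] := ltrP y0 (-1); first exact: case_a.
have [h2'|h2'] := lerP 0 y0; first exact: case_b.
exfalso.
have [e|e] : x0 = -1 \/ y0 = -1.
  move: hn; rewrite h' h2' !andbT.
  rewrite le_eqVlt in h; rewrite le_eqVlt in h2.
  case/orP: h => [/eqP <-|->]; first by left.
  case/orP: h2 => [/eqP <-|->]; first by right.
  by [].
- have : Epoly r x0 y0 = r * y0 by rewrite /Epoly e; ring.
  rewrite hE => /eqP; rewrite eq_sym mulf_eq0 => /orP[] /eqP h0.
    by move: hr; rewrite h0 ltxx.
  by move: h2'; rewrite h0 ltxx.
- have : Epoly r x0 y0 = r * x0 by rewrite /Epoly e; ring.
  rewrite hE => /eqP; rewrite eq_sym mulf_eq0 => /orP[] /eqP h0.
    by move: hr; rewrite h0 ltxx.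
  by move: h'; rewrite h0 ltxx.
Qed.

Lemma unb_pos r (p : R * R) : 1 < r -> Epoly r p.1 p.2 = 0 ->
  ~~ ((0 < p.1) && (0 < p.2)) ->
  ~ bounded2 (connected_component (Eaff r) p).
Proof.
case: p => x0 y0 /= hr hE hn.
have hE' : Epoly r y0 x0 = 0 by rewrite Epoly_sym.
have e1 : (x0, y0) = pt false x0 y0 by [].
have e2 : (x0, y0) = pt true y0 x0 by [].
have [h|h] := ltrP x0 (-1); first by rewrite e1; exact: case_a.
have [h2|h2] := ltrP y0 (-1); first by rewrite e2; exact: case_a.
have [h3|h3] := lerP x0 0; first by rewrite e1; exact: case_e.
have [h4|h4] := lerP y0 0; first by rewrite e2; exact: case_e.
by move: hn; rewrite h3 h4.
Qed.

End S.


Lemma core1 : forall x y u v w A B C D d : bool,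
  ~~ [&& (A && B ==> d), (~~A && ~~B ==> ~~d), (x && ~~y ==> A), (~~x && y ==> ~~B),
      (x ==> u), (y ==> v), (~~u && ~~y ==> ~~A), (~~v && ~~x ==> B),
      (~~u && ~~y ==> ~~w), (~~v && ~~x ==> ~~w), (u && y ==> w), (v && x ==> w),
      (x && ~~y ==> d), (~~x && y ==> ~~d),
      (((u == v) == w) == ((false == x) == y)),
      ((((((v == A) == A) == u) == B) == C)),
      ((w == D) == C),
      ~~ (((((y == d) == D) == u) == B) == C)
      & ~~ (((A == B) == D) == C)].
Proof. by do 10!case. Qed.

Lemma core2 : forall x y u v w A B C D d : bool,
  ~~ [&& (A && B ==> d), (~~A && ~~B ==> ~~d), (x && ~~y ==> A), (~~x && y ==> ~~B),
      (x ==> u), (y ==> v), (~~u && ~~y ==> ~~A), (~~v && ~~x ==> B),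
      (~~u && ~~y ==> ~~w), (~~v && ~~x ==> ~~w), (u && y ==> w), (v && x ==> w),
      (x && ~~y ==> d), (~~x && y ==> ~~d),
      ~~ [&& x, y, D, ~~C & d], ~~ [&& x, y, ~~D, C & ~~d],
      (~~u && ~~y ==> ~~D), (~~v ==> ~~D),
      (((u == v) == w) == ((true == x) == y)),
      ~~ ((((((v == A) == A) == u) == B) == C)),
      ~~ ((w == D) == C),
      ~~ (((((y == d) == D) == u) == B) == C)
      & ~~ (((A == B) == D) == C)].
Proof. by do 10!case. Qed.

Section T.
Variable R : realType.

Lemma sgM (a b : R) : a != 0 -> b != 0 -> (0 < a*b) = ((0<a) == (0<b)).
Proof.
move=> ha hb.
have [a0|a0|a0] := ltgtP 0 a; last by subst; rewrite eqxx in ha.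
- by rewrite pmulr_rgt0 // eqxx.
- rewrite nmulr_rgt0 //.
  have [b0|b0|b0] := ltgtP 0 b; last by subst; rewrite eqxx in hb.
  + by [].
  + by [].
Qed.

Lemma sgN (a : R) : a != 0 -> (0 < -a) = ~~ (0 < a).
Proof.
move=> ha; rewrite oppr_gt0.
have [a0|a0|a0] := ltgtP 0 a; last by subst; rewrite eqxx in ha.
- by [].
- by [].
Qed.

Lemma divpos (N Dn : R) : Dn != 0 -> (0 < N/Dn) = (0 < N*Dn).
Proof.
move=> hD.
have -> : N / Dn = (N*Dn) * (Dn^-1)^+2 by field.
apply: pmulr_lgt0; rewrite exprn_even_gt0 //= invr_eq0 //.
Qed.

Lemma onepdiv (N Dn : R) : Dn != 0 -> 1 + N/Dn = (N + Dn)/Dn.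
Proof. by move=> hD; field. Qed.

Lemma nz_of_prod3 {a b c : R} : a*b*c != 0 -> [/\ a != 0, b != 0 & c != 0].
Proof. by rewrite !mulf_eq0 !negb_or => /andP[/andP[-> ->] ->]. Qed.

Lemma Tcommon {s : R} {q : R * R} : s != 0 -> Epoly s q.1 q.2 = 0 -> T_defined q ->
  let x := q.1 in let y := q.2 in
  (x != 0 /\ y != 0 /\ 1 + x != 0 /\ 1 + y != 0 /\ 1 + x + y != 0 /\
      (-1 - y + x*y) != 0 /\ 1 + x - y^+2 != 0 /\ 1 + y - x^+2 != 0) /\
  (1+x)*(1+y)*(1+x+y) = s*x*y.
Proof.
case: q => x y /= hs0 hE [hd1 hd2]; rewrite /= in hd1 hd2.
have [hu hB hC] := nz_of_prod3 hd1.
move: hd2; rewrite mulf_eq0 negb_or => /andP[hD _].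
have hc : (1+x)*(1+y)*(1+x+y) = s*x*y.
  by apply/eqP; rewrite -subr_eq0; apply/eqP; rewrite -hE /Epoly; ring.
have hx : x != 0.
  apply/eqP => hx0.
  have h : Epoly s x y = (y+1)^+2 by rewrite /Epoly hx0; ring.
  rewrite h in hE; move/eqP: hE; rewrite sqrf_eq0 addr_eq0 => /eqP hy.
  by move: hB; rewrite hx0 hy; apply/negP; rewrite negbK; apply/eqP; ring.
have hy : y != 0.
  apply/eqP => hy0.
  have h : Epoly s x y = (x+1)^+2 by rewrite /Epoly hy0; ring.
  rewrite h in hE; move/eqP: hE; rewrite sqrf_eq0 addr_eq0 => /eqP hx1.
  by move: hu; rewrite hx1; apply/negP; rewrite negbK; apply/eqP; ring.
have : s*x*y != 0 by rewrite !mulf_neq0.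
rewrite -hc => /nz_of_prod3 [_ hv hw].
by do !split.
Qed.


Lemma impls {x y : R} : -1 - y + x*y != 0 ->
  [/\ ((0 < 1 + x - x*y) && (0 < -1 - y + x*y) ==> (0 < x - y)),
      (~~(0 < 1 + x - x*y) && ~~(0 < -1 - y + x*y) ==> ~~(0 < x - y)),
      ((0 < x) && ~~(0 < y) ==> (0 < 1 + x - x*y)),
      (~~(0 < x) && (0 < y) ==> ~~(0 < -1 - y + x*y)) &
      ((0 < x) ==> (0 < 1 + x))] /\
  [/\ ((0 < y) ==> (0 < 1 + y)),
      (~~(0 < 1 + x) && ~~(0 < y) ==> ~~(0 < 1 + x - x*y)),
      (~~(0 < 1 + y) && ~~(0 < x) ==> (0 < -1 - y + x*y)),
      (~~(0 < 1 + x) && ~~(0 < y) ==> ~~(0 < 1 + x + y)) &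
      (~~(0 < 1 + y) && ~~(0 < x) ==> ~~(0 < 1 + x + y))] /\
  [/\ ((0 < 1 + x) && (0 < y) ==> (0 < 1 + x + y)),
      ((0 < 1 + y) && (0 < x) ==> (0 < 1 + x + y)),
      ((0 < x) && ~~(0 < y) ==> (0 < x - y)),
      (~~(0 < x) && (0 < y) ==> ~~(0 < x - y)) &
      ~~ [&& 0 < x, 0 < y, 0 < 1 + y - x^+2, ~~(0 < 1 + x - y^+2) & 0 < x - y]] /\
  [/\ ~~ [&& 0 < x, 0 < y, ~~(0 < 1 + y - x^+2), 0 < 1 + x - y^+2 & ~~(0 < x - y)],
      (~~(0 < 1 + x) && ~~(0 < y) ==> ~~(0 < 1 + y - x^+2)) &
      (~~(0 < 1 + y) ==> ~~(0 < 1 + y - x^+2))].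
Proof.
move=> hB.
split; [split|split; [split|split; [split|split]]].
all: first [ apply/negP; case/and5P; rewrite -?leNgt => h1 h2 h3 h4 h5
           | apply/implyP; case/andP; rewrite -?leNgt => h1 h2
           | apply/implyP; rewrite -?leNgt => h1 ].
all: try by rewrite lt0r hB /=; nra.
all: nra.
Qed.
Lemma claim1 (s : R) (q : R * R) : s < 0 -> Epoly s q.1 q.2 = 0 -> T_defined q ->
  ~ (0 < (T q).1 /\ 0 < (T q).2).
Proof.
move=> hs hE hdef.
have [[hx [hy [hu [hv [hw [hB [hC hD]]]]]]] hc] := Tcommon (ltr0_neq0 hs) hE hdef.
move: hx hy hu hv hw hB hC hD hc hE hdef; case: q => x y /= hx hy hu hv hw hB hC hD hc hE hdef.
rewrite /T /= => -[hX hY].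
set A := 1 + x - x*y in hX *.
have hA : A != 0.
  by apply/eqP => hA0; move: hX; rewrite hA0 expr0n /= mulr0 mul0r ltxx.
have hd : x - y != 0.
  by apply/eqP => hd0; move: hY; rewrite hd0 expr0n /= !mul0r ltxx.
have hDX : (1 + x) * (-1 - y + x * y) * (1 + x - y ^+ 2) != 0 by rewrite !mulf_neq0.
have hDY : (1 + y - x ^+ 2) * (1 + x - y ^+ 2) != 0 by rewrite !mulf_neq0.
have hX1 : 0 < 1 + (1 + y) * A ^+ 2 / ((1 + x) * (-1 - y + x * y) * (1 + x - y ^+ 2)).
  by apply: (lt_trans hX); rewrite ltrDr.
have hY1 : 0 < 1 + (x - y) ^+ 2 * (1 + x + y) / ((1 + y - x ^+ 2) * (1 + x - y ^+ 2)).
  by apply: (lt_trans hY); rewrite ltrDr.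
rewrite divpos // in hX; rewrite divpos // in hY.
rewrite onepdiv // divpos // in hX1; rewrite onepdiv // divpos // in hY1.
have f1 : 0 < (1+y)*A*A*(1+x)*(-1 - y + x * y)*(1 + x - y ^+ 2).
  by move: hX; congr (0 < _); ring.
have f2 : 0 < (1+x+y)*(1 + y - x ^+ 2)*(1 + x - y ^+ 2).
  move: hY.
  have -> : (x - y) ^+ 2 * (1 + x + y) * ((1 + y - x ^+ 2) * (1 + x - y ^+ 2)) =
     (x - y) ^+ 2 * ((1+x+y)*(1 + y - x ^+ 2)*(1 + x - y ^+ 2)) by ring.
  by rewrite pmulr_rgt0 // exprn_even_gt0.
have f3 : 0 < - (y*(x-y)*(1 + y - x ^+ 2)*(1+x)*(-1 - y + x * y)*(1 + x - y ^+ 2)).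
  by move: hX1; congr (0 < _); rewrite /A; ring.
have f4 : 0 < - (A*(-1 - y + x * y)*(1 + y - x ^+ 2)*(1 + x - y ^+ 2)).
  by move: hY1; congr (0 < _); rewrite /A; ring.
have f5 : (0 < (1+x)*(1+y)*(1+x+y)) = (0 < s*x*y) by rewrite hc.
have hs0 := ltr0_neq0 hs.
rewrite ?sgN ?sgM ?mulf_neq0 // in f1 f2 f3 f4 f5.
have hs' : (0 < s) = false by rewrite ltNge ltW.
rewrite hs' in f5.
have f5' : (((0 < 1 + x) == (0 < 1 + y)) == (0 < 1 + x + y)) == ((false == (0 < x)) == (0 < y)) by rewrite f5.
have [[i1 i2 i3 i4 i5] [[i6 i7 i8 i9 i10] [[i11 i12 i13 i14 i15] [i16 i17 i18]]]] := impls hB.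
rewrite /A in f1 f4.
apply/negP: (core1 (0<x) (0<y) (0<1+x) (0<1+y) (0<1+x+y) (0<1+x-x*y) (0< -1-y+x*y) (0<1+x-y^+2) (0<1+y-x^+2) (0<x-y)).
by rewrite i1 i2 i3 i4 i5 i6 i7 i8 i9 i10 i11 i12 i13 i14 f1 f2 f3 f4 f5'.
Qed.
Lemma claim2 (s : R) (q : R * R) : 0 < s -> Epoly s q.1 q.2 = 0 -> T_defined q ->
  ~ ((-1 < (T q).1 < 0) && (-1 < (T q).2 < 0)).
Proof.
move=> hs hE hdef.
have [[hx [hy [hu [hv [hw [hB [hC hD]]]]]]] hc] := Tcommon (lt0r_neq0 hs) hE hdef.
move: hx hy hu hv hw hB hC hD hc hE hdef; case: q => x y /= hx hy hu hv hw hB hC hD hc hE hdef.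
rewrite /T /= => /andP[/andP[hX1 hX] /andP[hY1 hY]].
have {hX1}hX1 : 0 < 1 + (1 + y) * (1 + x - x*y) ^+ 2 / ((1 + x) * (-1 - y + x * y) * (1 + x - y ^+ 2)) by lra.
have {hY1}hY1 : 0 < 1 + (x - y) ^+ 2 * (1 + x + y) / ((1 + y - x ^+ 2) * (1 + x - y ^+ 2)) by lra.
have {hX}hX : 0 < - ((1 + y) * (1 + x - x*y) ^+ 2) / ((1 + x) * (-1 - y + x * y) * (1 + x - y ^+ 2)) by rewrite mulNr oppr_gt0.
have {hY}hY : 0 < - ((x - y) ^+ 2 * (1 + x + y)) / ((1 + y - x ^+ 2) * (1 + x - y ^+ 2)) by rewrite mulNr oppr_gt0.
set A := 1 + x - x*y in hX hX1 *.
have hA : A != 0.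
  by apply/eqP => hA0; move: hX; rewrite hA0 expr0n /= mulr0 oppr0 mul0r ltxx.
have hd : x - y != 0.
  by apply/eqP => hd0; move: hY; rewrite hd0 expr0n /= !mul0r oppr0 mul0r ltxx.
have hDX : (1 + x) * (-1 - y + x * y) * (1 + x - y ^+ 2) != 0 by rewrite !mulf_neq0.
have hDY : (1 + y - x ^+ 2) * (1 + x - y ^+ 2) != 0 by rewrite !mulf_neq0.
rewrite divpos // in hX; rewrite divpos // in hY.
rewrite onepdiv // divpos // in hX1; rewrite onepdiv // divpos // in hY1.
have f1 : 0 < - ((1+y)*A*A*(1+x)*(-1 - y + x * y)*(1 + x - y ^+ 2)).
  by move: hX; congr (0 < _); ring.
have f2 : 0 < - ((1+x+y)*(1 + y - x ^+ 2)*(1 + x - y ^+ 2)).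
  move: hY.
  have -> : - ((x - y) ^+ 2 * (1 + x + y)) * ((1 + y - x ^+ 2) * (1 + x - y ^+ 2)) =
     (x - y) ^+ 2 * (- ((1+x+y)*(1 + y - x ^+ 2)*(1 + x - y ^+ 2))) by ring.
  by rewrite pmulr_rgt0 // exprn_even_gt0.
have f3 : 0 < - (y*(x-y)*(1 + y - x ^+ 2)*(1+x)*(-1 - y + x * y)*(1 + x - y ^+ 2)).
  by move: hX1; congr (0 < _); rewrite /A; ring.
have f4 : 0 < - (A*(-1 - y + x * y)*(1 + y - x ^+ 2)*(1 + x - y ^+ 2)).
  by move: hY1; congr (0 < _); rewrite /A; ring.
have f5 : (0 < (1+x)*(1+y)*(1+x+y)) = (0 < s*x*y) by rewrite hc.
have hs0 := lt0r_neq0 hs.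
rewrite ?sgN ?sgM ?mulf_neq0 // in f1 f2 f3 f4 f5.
rewrite hs in f5.
have f5' : (((0 < 1 + x) == (0 < 1 + y)) == (0 < 1 + x + y)) == ((true == (0 < x)) == (0 < y)) by rewrite f5.
have [[i1 i2 i3 i4 i5] [[i6 i7 i8 i9 i10] [[i11 i12 i13 i14 i15] [i16 i17 i18]]]] := impls hB.
rewrite /A in f1 f4.
apply/negP: (core2 (0<x) (0<y) (0<1+x) (0<1+y) (0<1+x+y) (0<1+x-x*y) (0< -1-y+x*y) (0<1+x-y^+2) (0<1+y-x^+2) (0<x-y)).
by rewrite i1 i2 i3 i4 i5 i6 i7 i8 i9 i10 i11 i12 i13 i14 i15 i16 i17 i18 f1 f2 f3 f4 f5'.
Qed.

Lemma T_curve (s : R) (q : R * R) : s != 0 -> Epoly s q.1 q.2 = 0 -> T_defined q ->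
  Epoly (- s^-1) (T q).1 (T q).2 = 0.
Proof.
move=> hs0 hE hdef.
have [[hx [hy [hu [hv [hw [hB [hC hD]]]]]]] hc] := Tcommon hs0 hE hdef.
move: hx hy hu hv hw hB hC hD hc hE hdef; case: q => x y /= hx hy hu hv hw hB hC hD hc hE hdef.
have hs : s = (1+x)*(1+y)*(1+x+y)/(x*y) by rewrite hc; field; rewrite ?hx ?hy ?mulf_neq0.
rewrite hs /Epoly /T /=.
field.
by rewrite hC hD hB hu hy hx hw hv.
Qed.
End T.


Theorem mainTheorem4 (R : realType) (r : R) :
  ((r_minus R < r < 0) \/ (r_plus R < r)) ->
  forall p : R * R,
    Eaff r p ->
    bounded2 (connected_component (Eaff r) p) ->
    T_defined p -> T_defined (T p) ->
    Eaff r (T (T p)) /\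
    ~ bounded2 (connected_component (Eaff r) (T (T p))).
Proof.
move=> hr p hp _ hd1 hd2.
have rne : r != 0.
  case: hr => [/andP[_ h]|h]; first exact: ltr0_neq0.
  apply: lt0r_neq0; apply: lt_trans h; rewrite /r_plus.
  have := @sqrtr_ge0 R 5; lra.
have hq : Epoly (- r^-1) (T p).1 (T p).2 = 0 := T_curve _ _ _ rne hp hd1.
have sne : - r^-1 != 0 by rewrite oppr_eq0 invr_eq0.
have hq2 := T_curve _ _ _ sne hq hd2.
rewrite invrN invrK opprK in hq2.
split; first exact: hq2.
case: hr => [/andP[_ h]|h].
- have hs : 0 < - r^-1 by rewrite oppr_gt0 invr_lt0.
  apply: unb_neg => //.
  by apply/negP; apply: (claim2 _ _ _ hs hq hd2).
- have h1 : 1 < r.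
    move: h; rewrite /r_plus; have := @sqrtr_ge0 R 5; lra.
  have hs : - r^-1 < 0 by rewrite oppr_lt0 invr_gt0; lra.
  apply: unb_pos => //.
  by apply/negP => /andP[a b]; apply: (claim1 _ _ _ hs hq hd2).
Qed.
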